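(* Let $G$ be a reduced torsion-free abelian group. Then the following are equivalent: (i) $G$ is semi-generalized Bassian; (ii) $G$ is Bassian; (iii) $G$ has finite rank.
   Context: All groups are additively written abelian groups. A subgroup $H$ of a group $A$ is essential in $A$ if $H \cap S \neq \{0\}$ for every non-zero subgroup $S$ of $A$. A group $G$ is Bassian if the existence of an injective homomorphism $G\to G/N$ for a subgroup $N\le G$ forces $N=\{0\}$. $G$ is semi-generalized Bassian if, for every subgroup $H \le G$, the existence of an injective homomorphism $G \to G/H$ implies that $H$ is an essential subgroup of some direct summand of $G$. *)

(* Defs.v *)
(* abelian groups are zmodType's (additively written). *)
From mathcomp Require Import all_boot all_algebra.
Set Implicit Arguments. Unset Strict Implicit. Unset Printing Implicit Defensive.
Import GRing.Theory.
Local Open Scope ring_scope.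

Definition is_subgroup (G : zmodType) (H : G -> Prop) : Prop :=
  H 0 /\ (forall x y, H x -> H y -> H (x - y)).

Definition is_hom (G Q : zmodType) (f : G -> Q) : Prop :=
  forall x y, f (x + y) = f x + f y.

(* pi : G -> Q presents Q as the quotient G/N (surjective hom with kernel N). *)
Definition is_quotient_map (G Q : zmodType) (N : G -> Prop) (pi : G -> Q) : Prop :=
  [/\ is_hom pi, (forall q, exists g, pi g = q) & (forall x, pi x = 0 <-> N x)].

(* There is an injective homomorphism G -> G/N (for some, equivalently any,
   realisation of the quotient G/N). *)
Definition embeds_in_quotient (G : zmodType) (N : G -> Prop) : Prop :=
  exists (Q : zmodType) (pi : G -> Q) (f : G -> Q),
    [/\ is_quotient_map N pi, is_hom f & injective f].

Definition essential_in (G : zmodType) (H A : G -> Prop) : Prop :=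
  (forall x, H x -> A x) /\
  (forall S : G -> Prop, is_subgroup S -> (forall x, S x -> A x) ->
     (exists x, S x /\ x <> 0) -> exists x, [/\ H x, S x & x <> 0]).

Definition direct_summand (G : zmodType) (A : G -> Prop) : Prop :=
  exists B : G -> Prop, [/\ is_subgroup A, is_subgroup B,
     (forall x, A x -> B x -> x = 0) &
     (forall g, exists a b, [/\ A a, B b & g = a + b])].

Definition Bassian (G : zmodType) : Prop :=
  forall N : G -> Prop, is_subgroup N -> embeds_in_quotient N ->
    forall x, N x -> x = 0.

Definition semi_generalized_Bassian (G : zmodType) : Prop :=
  forall H : G -> Prop, is_subgroup H -> embeds_in_quotient H ->
    exists A : G -> Prop, direct_summand A /\ essential_in H A.

Definition torsion_free (G : zmodType) : Prop :=
  forall (x : G) (n : nat), x *+ n.+1 = 0 -> x = 0.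

Definition divisible_subgroup (G : zmodType) (D : G -> Prop) : Prop :=
  is_subgroup D /\ (forall x n, D x -> exists y, D y /\ y *+ n.+1 = x).

Definition reduced (G : zmodType) : Prop :=
  forall D : G -> Prop, divisible_subgroup D -> forall x, D x -> x = 0.

Definition Z_independent (G : zmodType) (s : seq G) : Prop :=
  forall c : seq int, size c = size s ->
    \sum_(i < size s) s`_i *~ c`_i = 0 -> forall i, c`_i = 0.

Definition finite_rank (G : zmodType) : Prop :=
  exists n : nat, forall s : seq G, Z_independent s -> (size s <= n)%N.

(* Main.v *)
Require Import Defs.
From HB Require Import structures.
From mathcomp Require Import all_boot all_algebra.
From mathcomp Require Import boolp classical_sets functions ring.
From Stdlib Require Import Cantor.
Set Implicit Arguments. Unset Strict Implicit. Unset Printing Implicit Defensive.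
Import GRing.Theory Num.Theory.
Local Open Scope ring_scope.

Section Hom.
Variables (G Q : zmodType) (f : G -> Q) (hf : is_hom f).
Lemma hom0 : f 0 = 0.
Proof. by apply/eqP; rewrite -(addrI (f 0) (_ : f 0 + f 0 = f 0 + 0)) // addr0 -hf addr0. Qed.
Lemma homN x : f (- x) = - f x.
Proof. by apply/eqP; rewrite -addr_eq0 -hf addNr hom0. Qed.
Lemma homB x y : f (x - y) = f x - f y.
Proof. by rewrite hf homN. Qed.
Lemma hom_sum I r (P : pred I) F : f (\sum_(i <- r | P i) F i) = \sum_(i <- r | P i) f (F i).
Proof. exact: (big_morph f hf hom0). Qed.
Lemma hom_mulrn x n : f (x *+ n) = f x *+ n.
Proof. by elim: n => [|n IH]; rewrite ?hom0 // !mulrS hf IH. Qed.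
Lemma hom_mulrz x z : f (x *~ z) = f x *~ z.
Proof. by case: z => n; rewrite ?NegzE ?mulrNz -?pmulrn ?hom_mulrn // homN hom_mulrn. Qed.
End Hom.

Lemma tf_int (G : zmodType) : torsion_free G -> forall (x : G) c, x *~ c = 0 -> c != 0 -> x = 0.
Proof.
move=> htf x [[|n]|n] //= h _; first exact: (htf x n).
by apply: (htf x n); apply/eqP; rewrite -oppr_eq0; apply/eqP; rewrite -h NegzE mulrNz.
Qed.

Lemma Zind_nil (G : zmodType) : Z_independent ([::] : seq G).
Proof. by move=> c /size0nil -> _ i; rewrite nth_nil. Qed.

Lemma FR_Bassian (G : zmodType) : torsion_free G -> finite_rank G -> Bassian G.
Proof.
move=> htf [n hn] N hN [Q [pi [f [[pih pis pik] fh finj]]]] x Nx.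
pose P k := `[< exists s : seq G, size s = k /\ Z_independent s >].
have P0 : exists k, P k by exists 0%N; rewrite /P; apply/asboolP; exists [::]; split=> //; exact: Zind_nil.
have Pb : forall k, P k -> (k <= n)%N by move=> k; rewrite /P => /asboolP [s [<- hs]]; exact: hn.
case: (ex_maxnP P0 Pb) => r Pr maxr.
move: Pr; rewrite /P => /asboolP [s0 [sz0 ind0]].
have [lift hlift] := choice pis.
pose L := rcons (map (lift \o f) s0) x.
have szL : size L = r.+1 by rewrite size_rcons size_map sz0.
have nL : ~ Z_independent L.
  move=> iL; suff : (r.+1 <= r)%N by rewrite ltnn.
  apply: maxr; rewrite /P; apply/asboolP; by exists L.
move: nL; rewrite /Z_independent -existsNE => -[c].
move=> /not_implyP [szc] /not_implyP [sum0]; rewrite -existsNE => -[i ci].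
move: sum0; rewrite szL big_ord_recr /= => sum0.
have EL j : (j < r)%N -> L`_j = lift (f s0`_j).
  by move=> jr; rewrite /L nth_rcons size_map sz0 jr (nth_map 0) ?sz0.
have Lr : L`_r = x by rewrite /L nth_rcons size_map sz0 ltnn eqxx.
have := congr1 pi sum0; rewrite (hom0 pih) pih (hom_sum pih) (hom_mulrz pih) Lr.
have -> : pi x = 0 by apply/pik.
rewrite mul0rz addr0.
under eq_bigr => j _ do rewrite (hom_mulrz pih) EL // hlift -(hom_mulrz fh).
rewrite -(hom_sum fh) -(hom0 fh) => /finj s0sum.
have ctake : forall j, (j < r)%N -> c`_j = 0.
  move=> j jr; have := ind0 (take r c); rewrite size_take szc szL sz0 ltnSn => /(_ erefl).
  have -> : \sum_(i0 < r) s0`_i0 *~ (take r c)`_i0 = \sum_(i0 < r) s0`_i0 *~ c`_i0.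
    by apply: eq_bigr => k _; rewrite nth_take.
  by move=> /(_ s0sum j); rewrite nth_take.
move: sum0; rewrite big1 ?add0r; last by move=> j _; rewrite ctake // mulr0z.
rewrite Lr => xc; apply: (tf_int htf xc).
case: (ltngtP i r) => ir.
- by case: ci; apply: ctake.
- by exfalso; apply: ci; rewrite nth_default // szc szL.
- by rewrite -ir; apply/eqP.
Qed.

Lemma Bassian_sgB (G : zmodType) : Bassian G -> semi_generalized_Bassian G.
Proof.
move=> hB H hH emb; have H0 := hB H hH emb.
exists (fun x => x = 0); split.
  exists (fun _ => True); split => //.
  - by split=> // x y -> ->; rewrite subr0.
  - by move=> g; exists 0, g; split; rewrite ?add0r.
split; first by move=> x /H0.
by move=> S _ SA [x [Sx x0]]; case: x0; apply: SA.
Qed.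
Section Comb.
Variable G : zmodType.
Implicit Types (s : seq (G * int)) (X : G -> Prop).

Definition eval s : G := \sum_(p <- s) p.1 *~ p.2.
Definition coef s (y : G) : int := \sum_(p <- s | p.1 == y) p.2.
Definition over X s := forall p, p \in s -> X p.1.
Definition indep X := forall s, over X s -> eval s = 0 -> forall y, coef s y = 0.
Definition scale (k : int) s := [seq (p.1, p.2 * k) | p <- s].
Definition lin (W : G -> rat) s : rat := \sum_(p <- s) p.2%:~R * W p.1.

Lemma regroup (M : zmodType) (r : seq G) s (F : G * int -> M) : uniq r ->
  (forall p, p \in s -> p.1 \in r) ->
  \sum_(p <- s) F p = \sum_(y <- r) \sum_(p <- s | p.1 == y) F p.
Proof.
move=> ur sr; under [RHS]eq_bigr => y _ do rewrite big_mkcond.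
rewrite [RHS]exchange_big /=; apply: eq_big_seq => p ps.
rewrite -big_mkcond big_const_seq.
have -> : count (fun y => p.1 == y) r = 1%N.
  by rewrite (eq_count (a2 := pred1 p.1)) ?count_uniq_mem ?sr // => y /=; rewrite eq_sym.
by rewrite /= addr0.
Qed.

Lemma eval_cat s1 s2 : eval (s1 ++ s2) = eval s1 + eval s2.
Proof. by rewrite /eval big_cat. Qed.
Lemma coef_cat s1 s2 y : coef (s1 ++ s2) y = coef s1 y + coef s2 y.
Proof. by rewrite /coef big_cat. Qed.
Lemma lin_cat W s1 s2 : lin W (s1 ++ s2) = lin W s1 + lin W s2.
Proof. by rewrite /lin big_cat. Qed.
Lemma eval_scale k s : eval (scale k s) = eval s *~ k.
Proof.
by rewrite /eval big_map mulrz_suml; apply: eq_bigr => p _ /=; rewrite mulrzA.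
Qed.
Lemma coef_scale k s y : coef (scale k s) y = coef s y * k.
Proof. by rewrite /coef big_map mulr_suml. Qed.
Lemma lin_scale W k s : lin W (scale k s) = k%:~R * lin W s.
Proof.
rewrite /lin big_map mulr_sumr; apply: eq_bigr => p _ /=.
by rewrite intrM mulrA [k%:~R * _]mulrC.
Qed.
Lemma over_cat X s1 s2 : over X s1 -> over X s2 -> over X (s1 ++ s2).
Proof. by move=> h1 h2 p; rewrite mem_cat => /orP[/h1|/h2]. Qed.
Lemma over_scale X k s : over X s -> over X (scale k s).
Proof. by move=> h p /mapP[q qs ->] /=; exact: h. Qed.

Lemma eval_regroup s : eval s = \sum_(y <- undup (map fst s)) y *~ coef s y.
Proof.
rewrite /eval (regroup (r:=undup (map fst s))) ?undup_uniq //; last by move=> p ps; rewrite mem_undup map_f.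
apply: eq_bigr => y _; rewrite /coef mulrz_sumr; apply: eq_bigr => p /eqP <-. done.
Qed.

Lemma lin_regroup W s : lin W s = \sum_(y <- undup (map fst s)) (coef s y)%:~R * W y.
Proof.
rewrite /lin (regroup (r:=undup (map fst s))) ?undup_uniq //; last by move=> p ps; rewrite mem_undup map_f.
apply: eq_bigr => y _; rewrite /coef rmorph_sum mulr_suml; apply: eq_bigr => p /eqP <-. done.
Qed.

Lemma key X W s : indep X -> over X s -> eval s = 0 -> lin W s = 0.
Proof.
move=> iX oX e0; rewrite lin_regroup big1 // => y _.
by rewrite (iX s oX e0 y) mul0r.
Qed.

Lemma chain_fin (F : set (set G)) : total_on F subset -> forall s,
  (forall p, p \in s -> exists2 X, F X & X p.1) -> s = [::] \/ exists2 X, F X & over X s.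
Proof.
move=> tot; elim=> [|p s IH] hs; first by left.
right; have [Y FY Yp] := hs p (mem_head _ _).
case: (IH (fun q qs => hs q (mem_behead (s:=p :: s) qs))) => [->|[Z FZ oZ]].
  by exists Y => // q; rewrite inE => /eqP ->.
case: (tot Y Z FY FZ) => [YZ|ZY].
  by exists Z => // q; rewrite inE => /orP[/eqP ->|/oZ //]; apply: YZ.
by exists Y => // q; rewrite inE => /orP[/eqP -> //|/oZ]; apply: ZY.
Qed.

Lemma exists_maxindep : exists X, indep X /\
  forall g, ~ X g -> ~ indep (fun x => X x \/ x = g).
Proof.
have [A [iA mA]] : exists A, indep A /\ forall B, proper A B -> ~ indep B.
  apply: Zorn_bigcup => F FP tot s os e0 y.
  case: (chain_fin tot os) => [sn|[X FX oX]]; first by rewrite sn /coef big_nil.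
  exact: (FP X FX s oX e0 y).
exists A; split => // g Ag; apply: mA; split; first by move=> x Ax; left.
by move=> /(_ g (or_intror erefl)).
Qed.

End Comb.

Section Rep.
Variables (G : zmodType) (X : G -> Prop).
Hypotheses (htf : torsion_free G) (iX : indep X)
  (mX : forall g, ~ X g -> ~ indep (fun x => X x \/ x = g)).

Lemma over1 x : X x -> over X [:: (x, 1)].
Proof. by move=> Xx p; rewrite inE => /eqP ->. Qed.
Lemma eval1 (x : G) : eval [:: (x, 1)] = x.
Proof. by rewrite /eval big_seq1. Qed.

Lemma rep_ex g : exists p : int * seq (G * int),
  [/\ p.1 != 0, over X p.2 & g *~ p.1 = eval p.2].
Proof.
case: (pselect (X g)) => Xg.
  by exists (1, [:: (g, 1)]); split => //; [exact: over1 | rewrite eval1].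
have := mX Xg; rewrite /indep => /existsNP [s] /not_implyP [os] /not_implyP [e0] /existsNP [y cy].
pose sr := filter (fun p => p.1 != g) s.
have esplit : eval s = g *~ coef s g + eval sr.
  rewrite /eval (bigID (fun p => p.1 == g)) /= big_filter; congr (_ + _).
  by rewrite /coef mulrz_sumr; apply: eq_bigr => p /eqP ->.
have osr : over X sr.
  move=> p; rewrite mem_filter => /andP[pg ps]; case: (os p ps) => // pge.
  by move: pg; rewrite pge eqxx.
have csr y' : y' != g -> coef s y' = coef sr y'.
  move=> yg; rewrite /coef big_filter_cond; apply: eq_bigl => p.
  by case: (eqVneq p.1 y') => [->|_]; rewrite ?yg ?andbF.
have cg : coef s g != 0.
  apply/eqP => cg0; apply: cy.
  have esr : eval sr = 0 by rewrite -e0 esplit cg0 mulr0z add0r.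
  case: (eqVneq y g) => [->//|yg]; rewrite csr //; exact: iX.
exists (coef s g, scale (-1) sr); split => //=; first exact: over_scale.
rewrite eval_scale mulrN1z; apply/eqP; rewrite -subr_eq0 opprK -esplit e0 //.
Qed.

Definition rp (g : G) := projT1 (cid (rep_ex g)).
Lemma rpP g : [/\ (rp g).1 != 0, over X (rp g).2 & g *~ (rp g).1 = eval (rp g).2].
Proof. exact: (projT2 (cid (rep_ex g))). Qed.

Definition T (W : G -> rat) (g : G) : rat := lin W (rp g).2 / ((rp g).1)%:~R.

Lemma T_rep W g c s : c != 0 -> over X s -> g *~ c = eval s -> T W g = lin W s / c%:~R.
Proof.
move=> c0 os ge; case: (rpP g) => c1 o1 e1; rewrite /T.
set c' := (rp g).1 in c1 e1 *; set s' := (rp g).2 in o1 e1 *.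
have E : eval (scale c s' ++ scale (- c') s) = 0.
  by rewrite eval_cat !eval_scale -e1 -ge -!mulrzA mulrN mulrNz [c * c']mulrC subrr.
have := key W iX (over_cat (over_scale (k:=c) o1) (over_scale (k:=-c') os)) E.
rewrite lin_cat !lin_scale rmorphN mulNr => /eqP; rewrite subr_eq0 => /eqP h.
apply/eqP; rewrite eqr_div ?intr_eq0 //; apply/eqP.
by rewrite mulrC h mulrC.
Qed.

Lemma T_add W g1 g2 : T W (g1 + g2) = T W g1 + T W g2.
Proof.
case: (rpP g1) => c1 o1 e1; case: (rpP g2) => c2 o2 e2.
rewrite {2}/T {2}/T.
set a1 := (rp g1).1 in c1 e1 *; set s1 := (rp g1).2 in o1 e1 *.
set a2 := (rp g2).1 in c2 e2 *; set s2 := (rp g2).2 in o2 e2 *.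
rewrite (@T_rep W _ (a1 * a2) (scale a2 s1 ++ scale a1 s2)).
- rewrite lin_cat !lin_scale intrM; field.
  by rewrite !intr_eq0 c1 c2.
- by rewrite mulf_neq0.
- exact: over_cat (over_scale (k:=a2) o1) (over_scale (k:=a1) o2).
- by rewrite eval_cat !eval_scale -e1 -e2 mulrzDl -!mulrzA [a2 * a1]mulrC.
Qed.

Lemma T_eval W s : over X s -> T W (eval s) = lin W s.
Proof. by move=> os; rewrite (@T_rep W _ 1 s) // ?mulr1z // divr1. Qed.

Lemma T_X W x : X x -> T W x = W x.
Proof.
move=> Xx; rewrite -{1}(eval1 x) T_eval; last exact: over1.
by rewrite /lin big_seq1 mul1r.
Qed.

Definition delta (y : G) : G -> rat := fun x => if x == y then 1 else 0.

Lemma lin_delta s y : lin (delta y) s = (coef s y)%:~R.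
Proof.
rewrite /lin /coef rmorph_sum [RHS]big_mkcond /=; apply: eq_bigr => p _.
by rewrite /delta; case: eqP; rewrite ?mulr1 ?mulr0.
Qed.

Lemma T_delta_inj g : (forall y, T (delta y) g = 0) -> g = 0.
Proof.
move=> h; case: (rpP g) => c1 o1 e1.
apply: (tf_int htf _ c1); rewrite e1 eval_regroup big1 // => y _.
have := h y; rewrite /T lin_delta => /eqP; rewrite mulf_eq0 invr_eq0 !intr_eq0 (negPf c1) orbF.
by move/eqP ->; rewrite mulr0z.
Qed.

End Rep.

Section Card.
Variables (T : eqType) (X : T -> Prop).

Lemma inf_seq (Y : T -> Prop) : (forall W : seq T, exists x, Y x /\ x \notin W) ->
  exists e : nat -> T, (forall k, Y (e k)) /\ injective e.
Proof.
move=> H; have [nx hnx] := choice H.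
pose L := fix L n := if n is n'.+1 then nx (L n') :: L n' else [::].
exists (fun k => nx (L k)); split; first by move=> k; case: (hnx (L k)).
have inL j k : (j < k)%N -> nx (L j) \in L k.
  elim: k => // k IH; rewrite ltnS leq_eqVlt => /orP[/eqP ->|/IH h] /=.
    by rewrite mem_head.
  by rewrite inE h orbT.
move=> j k; case: (ltngtP j k) => // jk e.
  by case: (hnx (L k)) => _; rewrite -e inL.
by case: (hnx (L j)) => _; rewrite e inL.
Qed.

Definition goodR (R : set (T * nat * T)) :=
  [/\ (forall a n b, R (a, n, b) -> X a /\ X b),
      (forall a n b b', R (a, n, b) -> R (a, n, b') -> b = b'),
      (forall a n a' n' b, R (a, n, b) -> R (a', n', b) -> a = a' /\ n = n'),
      (forall a n b, R (a, n, b) -> forall m, exists c, R (a, m, c)) &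
      (forall a n b, R (a, n, b) -> exists c, R (b, 0%N, c))].

Lemma to_nat_inj (p q : nat * nat) : to_nat p = to_nat q -> p = q.
Proof. by move=> h; rewrite -(cancel_of_to p) h cancel_of_to. Qed.
Arguments to_nat : simpl never.

Lemma triple_eq (a a' b b' : T) (n n' : nat) :
  (a, n, b) = (a', n', b') -> [/\ a = a', n = n' & b = b'].
Proof. by case=> -> -> ->. Qed.

Hypothesis inf : forall W : seq T, exists x, X x /\ x \notin W.

Lemma card_inf : exists phi : T -> nat -> T,
  (forall x n, X x -> X (phi x n)) /\
  (forall x x' n n', X x -> X x' -> phi x n = phi x' n' -> x = x' /\ n = n').
Proof.
have [R0 [gR0 mR0]] : exists R0, goodR R0 /\ forall B, proper R0 B -> ~ goodR B.
  apply: Zorn_bigcup => F FP tot.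
  have two t1 t2 : (exists2 R, F R & R t1) -> (exists2 R, F R & R t2) ->
      exists2 R, F R & R t1 /\ R t2.
    move=> [R1 F1 r1] [R2 F2 r2]; case: (tot R1 R2 F1 F2) => [s12|s21].
      by exists R2 => //; split => //; apply: s12.
    by exists R1 => //; split => //; apply: s21.
  split.
  - by move=> a n b [R FR r]; case: (FP R FR) => h _ _ _ _; exact: h r.
  - move=> a n b b' h1 h2; have [R FR [r1 r2]] := two _ _ h1 h2.
    by case: (FP R FR) => _ h _ _ _; exact: h r1 r2.
  - move=> a n a' n' b h1 h2; have [R FR [r1 r2]] := two _ _ h1 h2.
    by case: (FP R FR) => _ _ h _ _; exact: h r1 r2.
  - move=> a n b [R FR r] m; case: (FP R FR) => _ _ _ h _.
    by have [c rc] := h _ _ _ r m; exists c; exists R.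
  - move=> a n b [R FR r]; case: (FP R FR) => _ _ _ _ h.
    by have [c rc] := h _ _ _ r; exists c; exists R.
case: gR0 => RX Rfun Rinj Rtot Rcl.
pose D a := exists b, R0 (a, 0%N, b).
have DR a n b : R0 (a, n, b) -> D a.
  by move=> r; have [c rc] := Rtot _ _ _ r 0%N; exists c.
have [W hW] : exists W : seq T, forall x, X x -> ~ D x -> x \in W.
  apply/not_existsP => H.
  have [e [eY einj]] : exists e : nat -> T, (forall k, X (e k) /\ ~ D (e k)) /\ injective e.
    apply: (inf_seq (Y := fun x => X x /\ ~ D x)) => W; have := H W; move=> /existsNP [x] /not_implyP [Xx] /not_implyP [nD xW].
    by exists x; split => //; apply/negP.
  pose R' t := R0 t \/ exists i n, t = (e i, n, e (to_nat (i, n))).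
  apply: (mR0 R'); first split.
  - by move=> t; left.
  - move=> /(_ (e 0%N, 0%N, e (to_nat (0%N, 0%N)))) h.
    case: (eY 0%N) => _; apply; have := h (or_intror (ex_intro _ 0%N (ex_intro _ 0%N erefl))).
    by move=> r; exists (e (to_nat (0%N, 0%N))).
  split.
  - move=> a n b [r|[i [m /triple_eq [-> _ ->]]]]; first exact: RX r.
    by split; [exact: (eY i).1 | exact: (eY _).1].
  - move=> a n b b' [r1|[i1 [m1 /triple_eq [e1 n1 e1']]]] [r2|[i2 [m2 /triple_eq [e2 n2 e2']]]].
    + exact: Rfun r1 r2.
    + by exfalso; apply: (eY i2).2; rewrite -e2; apply: DR r1.
    + by exfalso; apply: (eY i1).2; rewrite -e1; apply: DR r2.
    + have i12 : i1 = i2 by apply: einj; rewrite -e1 -e2.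
      by rewrite e1' e2' i12 -n1 -n2.
  - move=> a n a' n' b [r1|[i1 [m1 /triple_eq [e1 e1n e1b]]]] [r2|[i2 [m2 /triple_eq [e2 e2n e2b]]]].
    + exact: Rinj r1 r2.
    + have [c rc] := Rcl _ _ _ r1; exfalso; apply: (eY (to_nat (i2, m2))).2.
      by rewrite -e2b; exists c.
    + have [c rc] := Rcl _ _ _ r2; exfalso; apply: (eY (to_nat (i1, m1))).2.
      by rewrite -e1b; exists c.
    + move: e1b; rewrite e2b => /einj /to_nat_inj [h1 h2].
      by rewrite e1 e2 e1n e2n h1 h2.
  - move=> a n b [r|[i [m /triple_eq [-> _ _]]]] k.
      by have [c rc] := Rtot _ _ _ r k; exists c; left.
    by exists (e (to_nat (i, k))); right; exists i, k.
  - move=> a n b [r|[i [m /triple_eq [_ _ ->]]]].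
      by have [c rc] := Rcl _ _ _ r; exists c; left.
    by exists (e (to_nat (to_nat (i, m), 0%N))); right; exists (to_nat (i, m)), 0%N.
have [a0 Da0] : exists a0, D a0.
  apply/not_existsP => H; have [x [Xx xW]] := inf W.
  by move: xW; rewrite hW // => xD; apply: (H x).
pose gR a n := if pselect (exists b, R0 (a, n, b)) is left H then projT1 (cid H) else a.
have gRP a n : D a -> R0 (a, n, gR a n).
  move=> [b rb]; rewrite /gR; case: pselect => [H|H].
    exact: (projT2 (cid H)).
  by case: H; apply: Rtot rb n.
pose phi x n := if pselect (D x) then gR x n.*2 else gR a0 (to_nat (index x W, n)).*2.+1.
exists phi; split.
  move=> x n Xx; rewrite /phi; case: pselect => Dx.
    by case: (RX _ _ _ (gRP x n.*2 Dx)).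
  by case: (RX _ _ _ (gRP a0 (to_nat (index x W, n)).*2.+1 Da0)).
move=> x x' n n' Xx Xx'; rewrite /phi; case: pselect => Dx; case: pselect => Dx' /= e.
- have r2 := gRP x' n'.*2 Dx'; rewrite -e in r2.
  have [-> h] := Rinj _ _ _ _ _ (gRP x n.*2 Dx) r2.
  by split => //; move: (congr1 half h); rewrite !doubleK.
- have r2 := gRP a0 (to_nat (index x' W, n')).*2.+1 Da0; rewrite -e in r2.
  have [_ h] := Rinj _ _ _ _ _ (gRP x n.*2 Dx) r2.
  by move: (congr1 odd h); rewrite /= !odd_double.
- have r2 := gRP x' n'.*2 Dx'; rewrite -e in r2.
  have [_ h] := Rinj _ _ _ _ _ (gRP a0 _ Da0) r2.
  by move: (congr1 odd h); rewrite /= !odd_double.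
- have r2 := gRP a0 (to_nat (index x' W, n')).*2.+1 Da0; rewrite -e in r2.
  have [_ [h]] := Rinj _ _ _ _ _ (gRP a0 _ Da0) r2.
  move: (congr1 half h); rewrite !doubleK => /to_nat_inj [hi ->]; split => //.
  by rewrite -(nth_index x (hW x Xx Dx)) hi nth_index // hW.
Qed.

End Card.

Section Img.
Variables (G W : zmodType) (h : G -> W) (hh : is_hom h).
Definition imgP : {pred W} := fun v => `[< exists g, h g = v >].
Fact img_closed : zmod_closed imgP.
Proof.
split; first by apply/asboolP; exists 0; exact: hom0.
move=> u v /asboolP [a <-] /asboolP [b <-]; apply/asboolP; exists (a - b); exact: homB.
Qed.
HB.instance Definition _ := GRing.isZmodClosed.Build W imgP img_closed.
Record img := Img { imgv : W; imgvP : imgv \in imgP }.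
HB.instance Definition _ := [isSub for imgv].
HB.instance Definition _ := [Choice of img by <:].
HB.instance Definition _ := [SubChoice_isSubZmodule of img by <:].

Lemma img_embeds (f : G -> W) : is_hom f -> injective f ->
  (forall g, exists g', h g' = f g) -> embeds_in_quotient (fun x => h x = 0).
Proof.
move=> fh finj fim.
have hP g : h g \in imgP by apply/asboolP; exists g.
have fP g : f g \in imgP by case: (fim g) => g' <-; exact: hP.
exists img, (fun g => Img (hP g)), (fun g => Img (fP g)); split.
- split.
  + by move=> x y; apply: val_inj; rewrite /= hh.
  + by case=> v vP; have /asboolP [g eg] := vP; exists g; apply: val_inj; rewrite /= eg.
  + move=> x; split => [/(congr1 val) /= -> //|hx].
    by apply: val_inj; rewrite /= hx.
- by move=> x y; apply: val_inj; rewrite /= fh.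
- by move=> x y /(congr1 val) /= /finj.
Qed.
End Img.

Section Dep.
Variable G : zmodType.

Lemma dep (m : nat) : forall n (ys : nat -> G) (vs : 'I_n -> G) (A : 'I_n -> nat -> int),
  (m < n)%N -> (forall i, vs i = \sum_(j < m) ys j *~ A i j) ->
  exists c : 'I_n -> int, \sum_i vs i *~ c i = 0 /\ exists i, c i != 0.
Proof.
elim: m => [|m IH] n ys vs A hn hv.
  case: n hn vs A hv => // n _ vs A hv; exists (fun _ => 1); split; last by exists ord0.
  by rewrite big1 // => i _; rewrite hv big_ord0 mul0rz.
case: (pselect (forall i, A i m = 0)) => [h0|].
  apply: (IH n ys vs A (ltnW hn)) => i.
  by rewrite hv big_ord_recr /= h0 mulr0z addr0.
move=> /existsNP [k /eqP akm].
case: n hn vs A hv k akm => // n hn vs A hv k akm.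
pose a := A k m.
pose vs' (i : 'I_n) := vs (lift k i) *~ a - vs k *~ A (lift k i) m.
pose A' (i : 'I_n) j := A (lift k i) j * a - A k j * A (lift k i) m.
have hv' i : vs' i = \sum_(j < m) ys j *~ A' i j.
  rewrite /vs' !hv !mulrz_suml -sumrB big_ord_recr /= -!mulrzA -mulrzBr.
  rewrite [A k m * _]mulrC subrr mulr0z addr0.
  by apply: eq_bigr => j _; rewrite -!mulrzA -mulrzBr.
have [d [d0 [i0 di0]]] := IH n ys vs' A' hn hv'.
pose c (i : 'I_n.+1) := if unlift k i is Some i' then d i' * a
                        else - \sum_(i' < n) d i' * A (lift k i') m.
exists c; split; last by exists (lift k i0); rewrite /c liftK mulf_neq0.
rewrite (bigD1_ord k) //= /c unlift_none.
under eq_bigr => i _ do rewrite liftK.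
move: d0; rewrite /vs' /=.
under eq_bigr => i _ do rewrite mulrzBl -!mulrzA.
rewrite sumrB -mulrz_sumr => /eqP; rewrite subr_eq0 => /eqP E.
have -> : \sum_(i' < n) d i' * A (lift k i') m = \sum_(i < n) A (lift k i) m * d i.
  by apply: eq_bigr => i _; rewrite mulrC.
rewrite mulrNz addrC -E; apply/eqP; rewrite subr_eq0; apply/eqP; apply: eq_bigr => i _.
by rewrite mulrC.
Qed.
End Dep.

Lemma eval_regroup_r (G : zmodType) (r : seq G) (s : seq (G * int)) : uniq r ->
  (forall p, p \in s -> p.1 \in r) -> eval s = \sum_(y <- r) y *~ coef s y.
Proof.
move=> ur sr; rewrite /eval (regroup (r:=r)) //.
apply: eq_bigr => y _; rewrite /coef mulrz_sumr; apply: eq_bigr => p /eqP <-. done.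
Qed.

Lemma nFR_inf (G : zmodType) (X : G -> Prop) (iX : indep X)
  (mX : forall g, ~ X g -> ~ indep (fun x => X x \/ x = g)) :
  ~ finite_rank G -> forall W : seq G, exists x, X x /\ x \notin W.
Proof.
move=> nFR W; apply/not_existsP => H.
have XW x : X x -> x \in W.
  move=> Xx; apply/negPn/negP => xW; apply: (H x); split => //.
pose r := undup W.
apply: nFR; exists (size r) => s si; rewrite leqNgt; apply/negP => hs.
pose n := size s.
pose vs (i : 'I_n) := s`_i *~ (rp iX mX s`_i).1.
pose A (i : 'I_n) j := coef (rp iX mX s`_i).2 r`_j.
have hv i : vs i = \sum_(j < size r) r`_j *~ A i j.
  case: (rpP iX mX s`_i) => _ o e; rewrite /vs e (eval_regroup_r (r:=r)) ?undup_uniq //.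
    by rewrite (big_nth 0) big_mkord.
  by move=> p ps; rewrite mem_undup; apply: XW; apply: o.
have [c [c0 [i0 ci0]]] := dep hs hv.
have := si (mkseq (fun i => (rp iX mX s`_i).1 * c (insubd i0 i)) n).
rewrite size_mkseq => /(_ erefl).
have -> : \sum_(i < size s) s`_i *~ (mkseq (fun i => (rp iX mX s`_i).1 * c (insubd i0 i)) n)`_i
          = \sum_i vs i *~ c i.
  apply: eq_bigr => i _; rewrite nth_mkseq // mulrzA.
  by have -> : insubd i0 i = i by apply: val_inj; rewrite val_insubd ltn_ord.
move=> /(_ c0 i0); rewrite nth_mkseq //.
have -> : insubd i0 i0 = i0 by apply: val_inj; rewrite val_insubd ltn_ord.
move=> /eqP; rewrite mulf_eq0 (negPf ci0) orbF.
by case: (rpP iX mX s`_i0) => /negPf ->.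
Qed.

Definition efac (c : int) : int :=
  match c with Posz n => (n.-1)`!%:Z | Negz n => - (n`!)%:Z end.

Lemma efacP c : c != 0 -> (efac c)%:~R * c%:~R = ((`|c|%N)`!)%:R :> rat.
Proof.
case: c => [[|k]|k] // _ /=.
  by rewrite -!pmulrn -natrM mulnC -factS.
by rewrite NegzE !rmorphN /= mulrNN -!pmulrn -natrM mulnC -factS.
Qed.

Section Constr.
Variables (G : zmodType) (htf : torsion_free G) (X : G -> Prop) (iX : indep X)
  (mX : forall g, ~ X g -> ~ indep (fun x => X x \/ x = g))
  (phi : G -> nat -> G) (phiX : forall x n, X x -> X (phi x n))
  (phiI : forall x x' n n', X x -> X x' -> phi x n = phi x' n' -> x = x' /\ n = n')
  (x0 : G) (Xx0 : X x0).

Local Notation TT := (T iX mX).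

Lemma TT_hom W : is_hom (TT W).
Proof. by move=> a b; apply: T_add. Qed.

Definition inv (z : G) : option (G * nat) :=
  match pselect (exists p : G * nat, X p.1 /\ phi p.1 p.2 = z) with
  | left H => Some (projT1 (cid H)) | right _ => None end.

Lemma inv_phi x n : X x -> inv (phi x n) = Some (x, n).
Proof.
move=> Xx; rewrite /inv; case: pselect => [H|[]]; last by exists (x, n).
case: (cid H) => [[x' n'] [/= Xx' e]] /=.
by case: (phiI Xx' Xx e) => -> ->.
Qed.

Definition wh (y : G) (z : G) : rat :=
  if inv z is Some (x, n) then (if x == y then (n`!%:R)^-1 else 0) else 0.

Lemma wh_phi x n y : X x -> wh y (phi x n) = if x == y then (n`!%:R)^-1 else 0.
Proof. by move=> Xx; rewrite /wh inv_phi. Qed.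

Definition hV (g : G) : G -> rat := fun y => TT (wh y) g.
Definition iota (g : G) : G -> rat := fun y => TT (delta y) g.

Lemma hV_hom : is_hom hV.
Proof. by move=> a b; apply: funext => y; rewrite /hV T_add. Qed.
Lemma iota_hom : is_hom iota.
Proof. by move=> a b; apply: funext => y; rewrite /iota T_add. Qed.

Lemma iota_inj : injective iota.
Proof.
move=> a b e; apply/eqP; rewrite -subr_eq0; apply/eqP.
apply: (@T_delta_inj _ _ htf iX mX) => y.
by rewrite T_add (homN (TT_hom _)) (_ : TT (delta y) a = TT (delta y) b)
   ?subrr //; exact: (congr1 (fun v => v y) e).
Qed.

Lemma iota_img g : exists g', hV g' = iota g.
Proof.
case: (rpP iX mX g) => c0 o e.
set c := (rp iX mX g).1 in c0 e *; set s := (rp iX mX g).2 in o e *.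
pose n := `|c|%N.
pose s' := [seq (phi p.1 n, p.2 * efac c) | p <- s].
have o' : over X s' by move=> q /mapP [p ps ->] /=; apply: phiX; apply: o.
exists (eval s'); apply: funext => y.
rewrite /hV /iota T_eval // /T -/c -/s /lin big_map mulr_suml.
apply: eq_big_seq => p ps /=; rewrite wh_phi; last exact: o. rewrite /delta.
case: eqP => _; last by rewrite !mulr0 mul0r.
have := efacP c0; rewrite -/n => <-.
have ec : (efac c)%:~R != 0 :> rat.
  by apply/eqP => h; move: (efacP c0); rewrite h mul0r => /esym/eqP; rewrite pnatr_eq0 gtn_eqF // fact_gt0.
have cc : c%:~R != 0 :> rat by rewrite intr_eq0.
field; by rewrite ec cc.
Qed.

Lemma X_neq0 x : X x -> x != 0.
Proof.
move=> Xx; apply/eqP => x0'; have := iX (over1 Xx) _ x.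
rewrite eval1 => /(_ x0'); rewrite /coef big_cons big_nil /= eqxx addr0.
by case.
Qed.

Definition NN (x : G) := hV x = 0.

Lemma NN_sub : is_subgroup NN.
Proof.
split; first exact: (hom0 hV_hom).
by move=> a b ha hb; rewrite /NN (homB hV_hom) ha hb subrr.
Qed.

Lemma NN_emb : embeds_in_quotient NN.
Proof. exact: (img_embeds hV_hom iota_hom iota_inj iota_img). Qed.

Lemma NN_nz : NN (phi x0 0 - phi x0 1) /\ phi x0 0 - phi x0 1 != 0.
Proof.
split.
  apply: funext => y; rewrite /hV T_add (homN (TT_hom _)) !T_X; try exact: phiX.
  by rewrite !wh_phi // invr1 subrr.
apply/negP; rewrite subr_eq0 => /eqP /(phiI Xx0 Xx0) [_].
done.
Qed.

Lemma notB : ~ Bassian G.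
Proof.
move=> hB; have [Nz nz] := NN_nz.
by move: nz; rewrite (hB _ NN_sub NN_emb _ Nz) eqxx.
Qed.

Lemma sub_opp (S : G -> Prop) x : is_subgroup S -> S x -> S (- x).
Proof. by case=> S0 SB Sx; rewrite -sub0r; apply: SB. Qed.
Lemma sub_add (S : G -> Prop) x y : is_subgroup S -> S x -> S y -> S (x + y).
Proof.
move=> hS Sx Sy; have Sy' := sub_opp hS Sy; rewrite -[y]opprK.
by case: hS => _ SB; apply: SB.
Qed.
Lemma sub_mulrn (S : G -> Prop) x n : is_subgroup S -> S x -> S (x *+ n).
Proof.
move=> hS Sx; elim: n => [|n IH]; first by rewrite mulr0n; case: hS.
by rewrite mulrS; apply: sub_add.
Qed.
Lemma sub_mulrz (S : G -> Prop) x k : is_subgroup S -> S x -> S (x *~ k).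
Proof.
move=> hS Sx; case: k => n; first by rewrite -pmulrn; apply: sub_mulrn.
by rewrite NegzE mulrNz -pmulrn; apply: sub_opp => //; apply: sub_mulrn.
Qed.

Lemma noSGB : reduced G -> ~ semi_generalized_Bassian G.
Proof.
move=> hred sgb; have [A [[B [sA sB AB dec]] [NA ess]]] := sgb NN NN_sub NN_emb.
pose g1 := phi x0 0.
have Xg1 : X g1 by apply: phiX.
pose e0 y := TT (wh y) g1.
have e0E y : e0 y = if x0 == y then 1 else 0.
  by rewrite /e0 T_X // wh_phi // fact0 invr1.
have divw r : exists g, forall y, TT (wh y) g = r * e0 y.
  pose c := denq r; have c0 : c != 0 by apply: denq_neq0.
  pose n := `|c|%N.
  exists (phi x0 n *~ (numq r * efac c)) => y.
  rewrite (hom_mulrz (TT_hom _)) T_X ?wh_phi ?e0E //; last by apply: phiX.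
  case: eqP => _; last by rewrite mul0rz mulr0.
  rewrite -mulrzr -efacP // intrM mulr1.
  have ec : (efac c)%:~R != 0 :> rat.
    by apply/eqP => h; move: (efacP c0); rewrite h mul0r => /esym/eqP; rewrite pnatr_eq0 gtn_eqF // fact_gt0.
  have cc : c%:~R != 0 :> rat by rewrite intr_eq0.
  rewrite -[in RHS](divq_num_den r) -/c.
  field; by rewrite ec cc.
pose D b := B b /\ exists g r, (forall y, TT (wh y) g = r * e0 y) /\ A (g - b).
have Dsub : divisible_subgroup D.
  split.
    split.
      split; first by case: sB.
      exists 0, 0; split; first by move=> y; rewrite (hom0 (TT_hom _)) mul0r.
      by rewrite subrr; case: sA.
    move=> u v [Bu [gu [ru [hu Au]]]] [Bv [gv [rv [hv Av]]]]; split.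
      by case: sB => _; apply.
    exists (gu - gv), (ru - rv); split.
      by move=> y; rewrite (homB (TT_hom _)) hu hv mulrBl.
    have -> : gu - gv - (u - v) = (gu - u) - (gv - v).
      by rewrite !opprB addrACA [RHS]addrACA [- gv + _]addrC.
    by case: sA => _; apply.
  move=> x n [Bx [g [r [hg Ag]]]].
  have [g' hg'] := divw (r / n.+1%:R).
  have [a' [b' [Aa' Bb' ge]]] := dec g'.
  exists b'; split.
    split => //; exists g', (r / n.+1%:R); split => //.
    by rewrite ge addrK.
  apply/eqP; rewrite -subr_eq0; apply/eqP; apply: AB; last first.
    by case: (sB) => _ SB; apply: SB => //; apply: sub_mulrn.
  have -> : b' *+ n.+1 - x = ((g' *+ n.+1 - g) - a' *+ n.+1) + (g - x).
    by rewrite ge mulrnDl [X in X + (g - x)]addrAC [a' *+ n.+1 + _]addrC addrK -addrA addKr.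
  apply: sub_add => //; apply: sub_add => //; last by apply: sub_opp => //; apply: sub_mulrn.
  apply: NA; apply: funext => y.
  rewrite /hV (homB (TT_hom _)) (hom_mulrn (TT_hom _)) hg' hg.
  rewrite -[X in X - _ = _]mulr_natr.
  have nn : n.+1%:R != 0 :> rat by rewrite pnatr_eq0.
  set z := e0 y; transitivity (0 : rat) => //; field; by rewrite addrC natr1.
have [a1 [b1 [Aa1 Bb1 g1E]]] := dec g1.
have b10 : b1 = 0.
  apply: (hred D Dsub); split => //; exists g1, 1; split.
    by move=> y; rewrite mul1r.
  by rewrite g1E addrK.
have Ag1 : A g1 by rewrite g1E b10 addr0.
pose S x := exists k : int, x = g1 *~ k.
have sS : is_subgroup S.
  split; first by exists 0; rewrite mulr0z.
  by move=> u v [k1 ->] [k2 ->]; exists (k1 - k2); rewrite mulrzBr.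
have [x [Nx [k xk] x0']] : exists x, [/\ NN x, S x & x <> 0].
  apply: ess => //.
    by move=> u [k ->]; apply: sub_mulrz.
  by exists g1; split; [exists 1; rewrite mulr1z | apply/eqP; apply: X_neq0].
apply: x0'; rewrite xk.
have hx : TT (wh x0) (g1 *~ k) = 0 by rewrite -xk; exact: (congr1 (fun v => v x0) Nx).
move: hx; rewrite (hom_mulrz (TT_hom _)) -/(e0 x0) e0E eqxx => /eqP.
rewrite -mulrzr mul1r intr_eq0 => /eqP ->.
by rewrite mulr0z.
Qed.

End Constr.

Theorem proposition2p6 (G : zmodType) (htf : torsion_free G) (hred : reduced G) :
  (semi_generalized_Bassian G <-> Bassian G) /\ (Bassian G <-> finite_rank G).
Proof.
have key : ~ finite_rank G -> ~ Bassian G /\ ~ semi_generalized_Bassian G.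
  move=> nFR.
  have [X [iX mX]] := exists_maxindep G.
  have inf := nFR_inf iX mX nFR.
  have [phi [phiX phiI]] := card_inf inf.
  have [x0 [Xx0 _]] := inf [::].
  split; first exact: (notB htf iX mX phiX phiI Xx0).
  exact: (noSGB htf iX mX phiX phiI Xx0 hred).
have FRB := FR_Bassian htf.
split; split.
- move=> h; case: (pselect (finite_rank G)) => [fr|nfr]; first exact: FRB.
  by case: ((key nfr).2 h).
- exact: Bassian_sgB.
- move=> h; case: (pselect (finite_rank G)) => [fr|nfr] //.
  by case: ((key nfr).1 h).
- exact: FRB.
Qed.
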